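(* Let $a>0$ and let $L_2=a\mathbb{Z}^3\cup a(\mathbb{Z}+\tfrac12)^3\cup W$. Then $$\sup_{x\in\mathbb{R}^3}\ \min_{p\in L_2}|x-p|=\frac{5\sqrt3}{24}a ,$$ and the set of points $x$ where this supremum is attained is exactly $$\Lambda=\Big\{p+\tfrac{5a}{24}(s_1,s_2,s_3):\ p\in a\mathbb{Z}^3\cup a(\mathbb{Z}+\tfrac12)^3,\ s_1,s_2,s_3\in\{-1,1\}\Big\}.$$ For example, $(5a/24,5a/24,5a/24)$ has exactly seven nearest points in $L_2$ at this distance: the origin and the six points $(0,a/4,a/2)$, $(0,a/2,a/4)$, $(a/4,a/2,0)$, $(a/2,a/4,0)$, $(a/4,0,a/2)$, $(a/2,0,a/4)$ of $W$.
   Context: Fix $a>0$. $W\subset\mathbb{R}^3$ is the set of all points $a(u_1,u_2,u_3)$ such that $(u_1,u_2,u_3)$ is a permutation of a triple $(i,\ j+\tfrac12,\ k+\varepsilon)$ with $i,j,k\in\mathbb{Z}$ and $\varepsilon\in\{\tfrac14,\tfrac34\}$. $|\cdot|$ is the Euclidean norm. *)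

(* Defs.v *)
From Stdlib Require Import Reals.
Open Scope R_scope.

Definition pt : Type := (R * R * R)%type.

Definition mkpt (x y z : R) : pt := (x, y, z).

Definition dist3 (x p : pt) : R :=
  match x, p with
  | (x1, x2, x3), (p1, p2, p3) =>
      sqrt ((x1 - p1) ^ 2 + (x2 - p2) ^ 2 + (x3 - p3) ^ 2)
  end.


Definition latZ3 (a : R) (p : pt) : Prop :=
  exists i j k : Z, p = mkpt (a * IZR i) (a * IZR j) (a * IZR k).

Definition latZ3half (a : R) (p : pt) : Prop :=
  exists i j k : Z,
    p = mkpt (a * (IZR i + /2)) (a * (IZR j + /2)) (a * (IZR k + /2)).

Definition is_perm3 (u1 u2 u3 v1 v2 v3 : R) : Prop :=
  (u1 = v1 /\ u2 = v2 /\ u3 = v3) \/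
  (u1 = v1 /\ u2 = v3 /\ u3 = v2) \/
  (u1 = v2 /\ u2 = v1 /\ u3 = v3) \/
  (u1 = v2 /\ u2 = v3 /\ u3 = v1) \/
  (u1 = v3 /\ u2 = v1 /\ u3 = v2) \/
  (u1 = v3 /\ u2 = v2 /\ u3 = v1).

Definition setW (a : R) (p : pt) : Prop :=
  exists (u1 u2 u3 : R) (i j k : Z) (eps : R),
    (eps = /4 \/ eps = 3/4) /\
    is_perm3 u1 u2 u3 (IZR i) (IZR j + /2) (IZR k + eps) /\
    p = mkpt (a * u1) (a * u2) (a * u3).

Definition L2 (a : R) (p : pt) : Prop :=
  latZ3 a p \/ latZ3half a p \/ setW a p.

Definition is_min_dist (a : R) (x : pt) (d : R) : Prop :=
  (exists p, L2 a p /\ dist3 x p = d) /\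
  (forall p, L2 a p -> d <= dist3 x p).

Definition is_sign (s : R) : Prop := s = 1 \/ s = -1.

Definition Lambda (a : R) (x : pt) : Prop :=
  exists (p1 p2 p3 s1 s2 s3 : R),
    (latZ3 a (mkpt p1 p2 p3) \/ latZ3half a (mkpt p1 p2 p3)) /\
    is_sign s1 /\ is_sign s2 /\ is_sign s3 /\
    x = mkpt (p1 + 5 * a / 24 * s1) (p2 + 5 * a / 24 * s2) (p3 + 5 * a / 24 * s3).

(* Main.v *)
Require Import Defs.
From Stdlib Require Import Reals Lra Lia Psatz ZArith.
Open Scope R_scope.

Definition isI (t : R) : Prop := exists k : Z, t = IZR k.
Definition isH (t : R) : Prop := exists k : Z, t = IZR k + /2.
Definition isF (t : R) : Prop := exists k : Z, t = IZR k + /4 \/ t = IZR k + 3/4.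
Definition Pat (X1 X2 X3 : R -> Prop) (a b c : R) : Prop := X1 a /\ X2 b /\ X3 c.
Definition Qp (a b c : R) : Prop :=
  Pat isI isI isI a b c \/ Pat isH isH isH a b c \/
  Pat isI isH isF a b c \/ Pat isI isF isH a b c \/
  Pat isH isI isF a b c \/ Pat isH isF isI a b c \/
  Pat isF isI isH a b c \/ Pat isF isH isI a b c.
Definition sqd (y1 y2 y3 q1 q2 q3 : R) : R := (y1-q1)^2 + (y2-q2)^2 + (y3-q3)^2.
Definition rho : R := 75/576.
Definition Lu (y1 y2 y3 : R) : Prop :=
  exists p1 p2 p3 s1 s2 s3,
    ((isI p1 /\ isI p2 /\ isI p3) \/ (isH p1 /\ isH p2 /\ isH p3)) /\
    is_sign s1 /\ is_sign s2 /\ is_sign s3 /\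
    y1 = p1 + 5/24*s1 /\ y2 = p2 + 5/24*s2 /\ y3 = p3 + 5/24*s3.
Definition Rel (t z : R) : Prop := exists m : Z, z = t + IZR m \/ z = IZR m - t.

Ltac zR := repeat rewrite ?plus_IZR, ?minus_IZR, ?opp_IZR, ?mult_IZR.

Lemma Rel_sym t z : Rel t z -> Rel z t.
Proof. intros [m [H|H]]. exists (-m)%Z; left; zR; lra. exists m; right; lra. Qed.

Lemma Rel_transfer t z q : Rel t z -> exists q', Rel q q' /\ (t - q)^2 = (z - q')^2.
Proof. intros [m [H|H]].
  exists (q + IZR m); split; [exists m; left; lra| subst; ring].
  exists (IZR m - q); split; [exists m; right; lra| subst; ring]. Qed.

Lemma relI q q' : Rel q q' -> isI q -> isI q'.
Proof. intros [m [H|H]] [k Hk]; subst.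
  exists (k+m)%Z; zR; lra. exists (m-k)%Z; zR; lra. Qed.
Lemma relH q q' : Rel q q' -> isH q -> isH q'.
Proof. intros [m [H|H]] [k Hk]; subst.
  exists (k+m)%Z; zR; lra. exists (m-k-1)%Z; zR; simpl; lra. Qed.
Lemma relF q q' : Rel q q' -> isF q -> isF q'.
Proof. intros [m [H|H]] [k [Hk|Hk]]; subst.
  exists (k+m)%Z; left; zR; lra. exists (k+m)%Z; right; zR; lra.
  exists (m-k-1)%Z; right; zR; simpl; lra. exists (m-k-1)%Z; left; zR; simpl; lra. Qed.

Lemma relQ q1 q2 q3 r1 r2 r3 : Rel q1 r1 -> Rel q2 r2 -> Rel q3 r3 -> Qp q1 q2 q3 -> Qp r1 r2 r3.
Proof.
  intros H1 H2 H3 HQ; unfold Qp, Pat in *.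
  destruct HQ as [[?[??]]|[[?[??]]|[[?[??]]|[[?[??]]|[[?[??]]|[[?[??]]|[[?[??]]|[?[??]]]]]]]]].
  - left; repeat split; eauto using relI, relH, relF.
  - right; left; repeat split; eauto using relI, relH, relF.
  - do 2 right; left; repeat split; eauto using relI, relH, relF.
  - do 3 right; left; repeat split; eauto using relI, relH, relF.
  - do 4 right; left; repeat split; eauto using relI, relH, relF.
  - do 5 right; left; repeat split; eauto using relI, relH, relF.
  - do 6 right; left; repeat split; eauto using relI, relH, relF.
  - do 7 right; repeat split; eauto using relI, relH, relF.
Qed.

Lemma relLuC y z p s : Rel y z -> y = p + 5/24*s -> is_sign s ->
  exists p' s', Rel p p' /\ is_sign s' /\ z = p' + 5/24*s'.
Proof.
  intros [m [H|H]] Hy Hs; subst.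
  - exists (p + IZR m), s; repeat split; auto; [exists m; left; lra | lra].
  - exists (IZR m - p), (-s); repeat split; [exists m; right; lra | | lra].
    destruct Hs; [right|left]; lra.
Qed.

Lemma relLu y1 y2 y3 z1 z2 z3 : Rel y1 z1 -> Rel y2 z2 -> Rel y3 z3 -> Lu y1 y2 y3 -> Lu z1 z2 z3.
Proof.
  intros H1 H2 H3 [p1 [p2 [p3 [s1 [s2 [s3 [Hc [S1 [S2 [S3 [E1 [E2 E3]]]]]]]]]]]].
  destruct (relLuC _ _ _ _ H1 E1 S1) as [p1' [s1' [R1 [T1 F1]]]].
  destruct (relLuC _ _ _ _ H2 E2 S2) as [p2' [s2' [R2 [T2 F2]]]].
  destruct (relLuC _ _ _ _ H3 E3 S3) as [p3' [s3' [R3 [T3 F3]]]].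
  exists p1', p2', p3', s1', s2', s3'; repeat split; auto.
  destruct Hc as [[?[??]]|[?[??]]]; [left|right]; repeat split; eauto using relI, relH.
Qed.

Definition Good (y1 y2 y3 : R) : Prop :=
  (exists q1 q2 q3, Qp q1 q2 q3 /\ sqd y1 y2 y3 q1 q2 q3 <= rho) /\
  ((forall q1 q2 q3, Qp q1 q2 q3 -> rho <= sqd y1 y2 y3 q1 q2 q3) -> Lu y1 y2 y3).

Lemma Good_rel y1 y2 y3 z1 z2 z3 : Rel y1 z1 -> Rel y2 z2 -> Rel y3 z3 -> Good z1 z2 z3 -> Good y1 y2 y3.
Proof.
  intros H1 H2 H3 [[q1 [q2 [q3 [HQ Hd]]]] HE].
  apply Rel_sym in H1; apply Rel_sym in H2; apply Rel_sym in H3.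
  split.
  - destruct (Rel_transfer _ _ q1 H1) as [r1 [R1 E1]].
    destruct (Rel_transfer _ _ q2 H2) as [r2 [R2 E2]].
    destruct (Rel_transfer _ _ q3 H3) as [r3 [R3 E3]].
    exists r1, r2, r3; split; [eapply relQ; eauto|].
    unfold sqd in *; lra.
  - intros Hall. eapply relLu; [exact H1|exact H2|exact H3|].
    apply HE; intros r1 r2 r3 HQr.
    destruct (Rel_transfer _ _ r1 H1) as [u1 [R1 E1]].
    destruct (Rel_transfer _ _ r2 H2) as [u2 [R2 E2]].
    destruct (Rel_transfer _ _ r3 H3) as [u3 [R3 E3]].
    specialize (Hall u1 u2 u3 ltac:(eapply relQ; eauto)).
    unfold sqd in *; lra.
Qed.
Lemma Qp_sw12 a b c : Qp a b c -> Qp b a c.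
Proof. unfold Qp, Pat; tauto. Qed.
Lemma Qp_sw23 a b c : Qp a b c -> Qp a c b.
Proof. unfold Qp, Pat; tauto. Qed.
Lemma Lu_sw12 a b c : Lu a b c -> Lu b a c.
Proof. intros [p1 [p2 [p3 [s1 [s2 [s3 [Hc [S1 [S2 [S3 [E1 [E2 E3]]]]]]]]]]]].
  exists p2, p1, p3, s2, s1, s3; repeat split; auto; tauto. Qed.
Lemma Lu_sw23 a b c : Lu a b c -> Lu a c b.
Proof. intros [p1 [p2 [p3 [s1 [s2 [s3 [Hc [S1 [S2 [S3 [E1 [E2 E3]]]]]]]]]]]].
  exists p1, p3, p2, s1, s3, s2; repeat split; auto; tauto. Qed.

Lemma Good_sw12 a b c : Good b a c -> Good a b c.
Proof. intros [[q1 [q2 [q3 [HQ Hd]]]] HE]; split.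
  - exists q2, q1, q3; split; [apply Qp_sw12; auto| unfold sqd in *; lra].
  - intros Hall; apply Lu_sw12, HE; intros r1 r2 r3 Hr.
    specialize (Hall r2 r1 r3 (Qp_sw12 _ _ _ Hr)); unfold sqd in *; lra.
Qed.
Lemma Good_sw23 a b c : Good a c b -> Good a b c.
Proof. intros [[q1 [q2 [q3 [HQ Hd]]]] HE]; split.
  - exists q1, q3, q2; split; [apply Qp_sw23; auto| unfold sqd in *; lra].
  - intros Hall; apply Lu_sw23, HE; intros r1 r2 r3 Hr.
    specialize (Hall r1 r3 r2 (Qp_sw23 _ _ _ Hr)); unfold sqd in *; lra.
Qed.

Lemma isI0 : isI 0. Proof. exists 0%Z; reflexivity. Qed.
Lemma isHh : isH (/2). Proof. exists 0%Z; simpl; lra. Qed.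
Lemma isFq : isF (/4). Proof. exists 0%Z; left; simpl; lra. Qed.

Lemma Good_region y1 y2 y3 : 0 <= y1 -> y1 <= y2 -> y2 <= y3 -> y3 <= /2 -> Good y1 y2 y3.
Proof.
  intros h1 h2 h3 h4.
  assert (QA : Qp 0 0 0) by (left; repeat split; apply isI0).
  assert (QB : Qp (/2) (/2) (/2)) by (right; left; repeat split; apply isHh).
  assert (QC : Qp 0 (/4) (/2)) by (do 3 right; left; repeat split; auto using isI0, isHh, isFq).
  split.
  - destruct (Rle_dec (y2/2 + y3) (5/16)).
    { exists 0, 0, 0; split; auto; unfold sqd, rho; nra. }
    destruct (Rle_dec (7/16) (y1 + y2/2)).
    { exists (/2), (/2), (/2); split; auto; unfold sqd, rho; nra. }
    exists 0, (/4), (/2); split; auto; unfold sqd, rho.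
    destruct (Rle_dec (y1+y2+y3) (3/4)); nra.
  - intros Hall.
    pose proof (Hall _ _ _ QA) as HA; pose proof (Hall _ _ _ QB) as HB;
    pose proof (Hall _ _ _ QC) as HC; unfold sqd, rho in HA, HB, HC.
    destruct (Rle_dec (y2/2 + y3) (5/16)).
    { assert (/12 * ((y2-y1)+(y3-y2)+(5/16-y2/2-y3)) <= 75/576 - ((y1-0)^2+(y2-0)^2+(y3-0)^2)) by nra.
      exists 0, 0, 0, 1, 1, 1; repeat split; try (left; reflexivity); try lra.
      left; repeat split; apply isI0. }
    destruct (Rle_dec (7/16) (y1 + y2/2)).
    { assert (/12 * ((y2-y1)+(y3-y2)+(y1+y2/2-7/16)) <= 75/576 - ((y1-/2)^2+(y2-/2)^2+(y3-/2)^2)) by nra.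
      exists (/2), (/2), (/2), (-1), (-1), (-1); repeat split; try (right; reflexivity); try lra.
      right; repeat split; apply isHh. }
    exfalso.
    destruct (Rle_dec (y1+y2+y3) (3/4)).
    { assert (/24 * ((y2-y1)+(y3-y2)+(y2/2+y3-5/16)) <= 75/576 - ((y1-0)^2+(y2-/4)^2+(y3-/2)^2)) by nra.
      lra. }
    { assert (/24 * ((y2-y1)+(y3-y2)+(7/16-y1-y2/2)) <= 75/576 - ((y1-0)^2+(y2-/4)^2+(y3-/2)^2)) by nra.
      lra. }
Qed.

Lemma Good_box y1 y2 y3 : 0 <= y1 <= /2 -> 0 <= y2 <= /2 -> 0 <= y3 <= /2 -> Good y1 y2 y3.
Proof.
  intros h1 h2 h3.
  destruct (Rle_dec y1 y2); destruct (Rle_dec y2 y3); destruct (Rle_dec y1 y3).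
  - apply Good_region; lra.
  - apply Good_region; lra.
  - apply Good_sw23, Good_region; lra.
  - apply Good_sw23, Good_sw12, Good_region; lra.
  - apply Good_sw12, Good_region; lra.
  - apply Good_sw12, Good_sw23, Good_region; lra.
  - apply Good_sw12, Good_sw23, Good_sw12, Good_region; lra.
  - apply Good_sw12, Good_sw23, Good_sw12, Good_region; lra.
Qed.

Lemma fold_t t : exists z, 0 <= z <= /2 /\ Rel t z.
Proof.
  destruct (archimed t) as [H1 H2].
  destruct (Rle_dec (t - (IZR (up t) - 1)) (/2)).
  - exists (t - (IZR (up t) - 1)); split; [lra|].
    exists (1 - up t)%Z; left; zR; simpl; lra.
  - exists (IZR (up t) - t); split; [lra|]. exists (up t); right; lra.
Qed.

Lemma Good_all y1 y2 y3 : Good y1 y2 y3.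
Proof.
  destruct (fold_t y1) as [z1 [B1 R1]]; destruct (fold_t y2) as [z2 [B2 R2]];
  destruct (fold_t y3) as [z3 [B3 R3]].
  apply (Good_rel _ _ _ z1 z2 z3); auto. apply Good_box; auto.
Qed.

Lemma zsq E (k m : Z) g d j dd : E = IZR k - IZR m + g -> dd <= d^2 -> 0 <= d ->
  d <= g + IZR j -> g + IZR j <= 1 - d -> dd <= E^2.
Proof.
  intros HE Hd Hd0 Hj1 Hj2.
  assert (HE' : E = IZR (k - m - j) + (g + IZR j)) by (rewrite HE; zR; ring).
  destruct (Z_lt_le_dec (k - m - j) 0) as [h|h].
  - assert (IZR (k-m-j) <= -1) by (apply IZR_le; lia). nra.
  - assert (0 <= IZR (k-m-j)) by (apply IZR_le; lia). nra.
Qed.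

Ltac tryg k m d :=
  first [ eapply (zsq _ k m (5/24) d 0%Z); [lra|nra|lra|simpl;lra|simpl;lra]
        | eapply (zsq _ k m (-5/24) d 1%Z); [lra|nra|lra|simpl;lra|simpl;lra]
        | eapply (zsq _ k m (-7/24) d 1%Z); [lra|nra|lra|simpl;lra|simpl;lra]
        | eapply (zsq _ k m (-17/24) d 1%Z); [lra|nra|lra|simpl;lra|simpl;lra]
        | eapply (zsq _ k m (17/24) d 0%Z); [lra|nra|lra|simpl;lra|simpl;lra]
        | eapply (zsq _ k m (7/24) d 0%Z); [lra|nra|lra|simpl;lra|simpl;lra]
        | eapply (zsq _ k m (-1/24) d 1%Z); [lra|nra|lra|simpl;lra|simpl;lra]
        | eapply (zsq _ k m (-13/24) d 1%Z); [lra|nra|lra|simpl;lra|simpl;lra]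
        | eapply (zsq _ k m (-11/24) d 1%Z); [lra|nra|lra|simpl;lra|simpl;lra]
        | eapply (zsq _ k m (-23/24) d 1%Z); [lra|nra|lra|simpl;lra|simpl;lra]
        | eapply (zsq _ k m (11/24) d 0%Z); [lra|nra|lra|simpl;lra|simpl;lra]
        | eapply (zsq _ k m (1/24) d 0%Z); [lra|nra|lra|simpl;lra|simpl;lra] ].

Lemma bI p s q : isI p -> is_sign s ->
  (isI q -> 25/576 <= (p + 5/24*s - q)^2) /\ (isH q -> 49/576 <= (p + 5/24*s - q)^2) /\
  (isF q -> 1/576 <= (p + 5/24*s - q)^2).
Proof.
  intros [k Hk] Hs; subst p; repeat split.
  - intros [m Hm]; subst q; destruct Hs; subst s; tryg k m (5/24).
  - intros [m Hm]; subst q; destruct Hs; subst s; tryg k m (7/24).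
  - intros [m [Hm|Hm]]; subst q; destruct Hs; subst s; tryg k m (1/24).
Qed.

Lemma bH p s q : isH p -> is_sign s ->
  (isI q -> 49/576 <= (p + 5/24*s - q)^2) /\ (isH q -> 25/576 <= (p + 5/24*s - q)^2) /\
  (isF q -> 1/576 <= (p + 5/24*s - q)^2).
Proof.
  intros [k Hk] Hs; subst p; repeat split.
  - intros [m Hm]; subst q; destruct Hs; subst s; tryg k m (7/24).
  - intros [m Hm]; subst q; destruct Hs; subst s; tryg k m (5/24).
  - intros [m [Hm|Hm]]; subst q; destruct Hs; subst s; tryg k m (1/24).
Qed.

Lemma T3 y1 y2 y3 q1 q2 q3 : Lu y1 y2 y3 -> Qp q1 q2 q3 -> rho <= sqd y1 y2 y3 q1 q2 q3.
Proof.
  intros [p1 [p2 [p3 [s1 [s2 [s3 [Hc [S1 [S2 [S3 [E1 [E2 E3]]]]]]]]]]]] HQ.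
  subst y1 y2 y3; unfold sqd, rho.
  destruct Hc as [[c1 [c2 c3]]|[c1 [c2 c3]]];
  [ destruct (bI p1 s1 q1 c1 S1) as [a1 [b1 d1]];
    destruct (bI p2 s2 q2 c2 S2) as [a2 [b2 d2]];
    destruct (bI p3 s3 q3 c3 S3) as [a3 [b3 d3]]
  | destruct (bH p1 s1 q1 c1 S1) as [a1 [b1 d1]];
    destruct (bH p2 s2 q2 c2 S2) as [a2 [b2 d2]];
    destruct (bH p3 s3 q3 c3 S3) as [a3 [b3 d3]] ];
  unfold Qp, Pat in HQ;
  destruct HQ as [[?[??]]|[[?[??]]|[[?[??]]|[[?[??]]|[[?[??]]|[[?[??]]|[[?[??]]|[?[??]]]]]]]]];
  repeat match goal with H: ?X ?q, G: ?X ?q -> _ |- _ => specialize (G H) end; lra.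
Qed.

Lemma nearZ t : exists k : Z, forall m : Z, (t - IZR k)^2 <= (t - IZR m)^2.
Proof.
  destruct (archimed t) as [H1 H2].
  assert (Hu : IZR (up t - 1) = IZR (up t) - 1) by (zR; simpl; ring).
  assert (key : forall m : Z, (t - IZR (up t - 1))^2 <= (t - IZR m)^2 \/
                              (t - IZR (up t))^2 <= (t - IZR m)^2).
  { intros m. destruct (Z_lt_le_dec m (up t)) as [h|h].
    - left. assert (IZR m <= IZR (up t - 1)) by (apply IZR_le; lia). nra.
    - right. assert (IZR (up t) <= IZR m) by (apply IZR_le; lia). nra. }
  destruct (Rle_dec (t - (IZR (up t) - 1)) (IZR (up t) - t)).
  - exists (up t - 1)%Z; intros m; destruct (key m); [auto| nra].
  - exists (up t); intros m; destruct (key m); [nra| auto].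
Qed.

Definition near (X : R -> Prop) (t : R) : Prop :=
  exists q, X q /\ forall q', X q' -> (t - q)^2 <= (t - q')^2.

Lemma nearI t : near isI t.
Proof. destruct (nearZ t) as [k Hk]; exists (IZR k); split; [exists k; auto|].
  intros q' [m Hm]; subst; auto. Qed.
Lemma nearH t : near isH t.
Proof. destruct (nearZ (t - /2)) as [k Hk]; exists (IZR k + /2); split; [exists k; auto|].
  intros q' [m Hm]; subst. specialize (Hk m).
  replace (t - (IZR k + /2)) with (t - /2 - IZR k) by ring.
  replace (t - (IZR m + /2)) with (t - /2 - IZR m) by ring. auto. Qed.
Lemma nearF t : near isF t.
Proof. destruct (nearZ (2*t - /2)) as [k Hk]; exists (IZR k / 2 + /4); split.
  - destruct (Z.Even_or_Odd k) as [[j Hj]|[j Hj]]; subst k; exists j; [left|right]; zR; simpl; lra.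
  - intros q' [m [Hm|Hm]]; subst.
    + specialize (Hk (2*m)%Z). rewrite mult_IZR in Hk. simpl in Hk. nra.
    + specialize (Hk (2*m+1)%Z). rewrite plus_IZR, mult_IZR in Hk. simpl in Hk. nra.
Qed.

Definition MinOn (P : R -> R -> R -> Prop) (y1 y2 y3 : R) : Prop :=
  exists q1 q2 q3, P q1 q2 q3 /\
    forall r1 r2 r3, P r1 r2 r3 -> sqd y1 y2 y3 q1 q2 q3 <= sqd y1 y2 y3 r1 r2 r3.

Lemma MinOn_or (P Q : R -> R -> R -> Prop) y1 y2 y3 :
  MinOn P y1 y2 y3 -> MinOn Q y1 y2 y3 -> MinOn (fun a b c => P a b c \/ Q a b c) y1 y2 y3.
Proof.
  intros [q1 [q2 [q3 [HP HPm]]]] [u1 [u2 [u3 [HQ HQm]]]].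
  destruct (Rle_dec (sqd y1 y2 y3 q1 q2 q3) (sqd y1 y2 y3 u1 u2 u3)).
  - exists q1, q2, q3; split; [auto|]. intros r1 r2 r3 [H|H];
      [apply HPm; auto| specialize (HQm _ _ _ H); lra].
  - exists u1, u2, u3; split; [auto|]. intros r1 r2 r3 [H|H];
      [specialize (HPm _ _ _ H); lra| apply HQm; auto].
Qed.

Lemma MinOn_pat X1 X2 X3 y1 y2 y3 : near X1 y1 -> near X2 y2 -> near X3 y3 ->
  MinOn (Pat X1 X2 X3) y1 y2 y3.
Proof.
  intros [q1 [A1 B1]] [q2 [A2 B2]] [q3 [A3 B3]].
  exists q1, q2, q3; split; [repeat split; auto|].
  intros r1 r2 r3 [C1 [C2 C3]]; unfold sqd.
  specialize (B1 _ C1); specialize (B2 _ C2); specialize (B3 _ C3); lra.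
Qed.

Lemma MinQ y1 y2 y3 : MinOn Qp y1 y2 y3.
Proof.
  unfold Qp; repeat apply MinOn_or; apply MinOn_pat; auto using nearI, nearH, nearF.
Qed.

Lemma clsI t : isI t -> (5/24 - t)^2 <= rho -> t = 0.
Proof. unfold rho; intros [k Hk] H; subst.
  destruct (Z.lt_trichotomy k 0) as [h|[h|h]].
  - assert (IZR k <= -1) by (apply IZR_le; lia). nra.
  - subst; reflexivity.
  - assert (1 <= IZR k) by (apply IZR_le; lia). nra. Qed.
Lemma clsH t : isH t -> (5/24 - t)^2 <= rho -> t = /2.
Proof. unfold rho; intros [k Hk] H; subst.
  destruct (Z.lt_trichotomy k 0) as [h|[h|h]].
  - assert (IZR k <= -1) by (apply IZR_le; lia). nra.
  - subst; simpl; lra.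
  - assert (1 <= IZR k) by (apply IZR_le; lia). nra. Qed.
Lemma clsF t : isF t -> (5/24 - t)^2 <= rho -> t = /4.
Proof. unfold rho; intros [k [Hk|Hk]] H; subst;
  (destruct (Z.lt_trichotomy k 0) as [h|[h|h]];
  [ assert (IZR k <= -1) by (apply IZR_le; lia); nra
  | subst; simpl in *; lra
  | assert (1 <= IZR k) by (apply IZR_le; lia); nra]). Qed.

Lemma ex_cls q1 q2 q3 : Qp q1 q2 q3 -> sqd (5/24) (5/24) (5/24) q1 q2 q3 = rho ->
  (q1 = 0 /\ q2 = 0 /\ q3 = 0) \/ (q1 = 0 /\ q2 = /4 /\ q3 = /2) \/
  (q1 = 0 /\ q2 = /2 /\ q3 = /4) \/ (q1 = /4 /\ q2 = /2 /\ q3 = 0) \/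
  (q1 = /2 /\ q2 = /4 /\ q3 = 0) \/ (q1 = /4 /\ q2 = 0 /\ q3 = /2) \/
  (q1 = /2 /\ q2 = 0 /\ q3 = /4).
Proof.
  intros HQ Hs. unfold sqd in Hs.
  pose proof (pow2_ge_0 (5/24 - q1)); pose proof (pow2_ge_0 (5/24 - q2));
  pose proof (pow2_ge_0 (5/24 - q3)).
  assert (h1 : (5/24 - q1)^2 <= rho) by lra.
  assert (h2 : (5/24 - q2)^2 <= rho) by lra.
  assert (h3 : (5/24 - q3)^2 <= rho) by lra.
  unfold Qp, Pat in HQ;
  destruct HQ as [[c1[c2 c3]]|[[c1[c2 c3]]|[[c1[c2 c3]]|[[c1[c2 c3]]|[[c1[c2 c3]]|[[c1[c2 c3]]|[[c1[c2 c3]]|[c1[c2 c3]]]]]]]]];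
  repeat match goal with
  | H : isI ?q, G : (5/24 - ?q)^2 <= rho |- _ => apply (clsI _ H) in G; clear H
  | H : isH ?q, G : (5/24 - ?q)^2 <= rho |- _ => apply (clsH _ H) in G; clear H
  | H : isF ?q, G : (5/24 - ?q)^2 <= rho |- _ => apply (clsF _ H) in G; clear H
  end; subst; tauto || (unfold rho in Hs; lra).
Qed.

Lemma Fe t : isF t -> exists k eps, (eps = /4 \/ eps = 3/4) /\ t = IZR k + eps.
Proof. intros [k [H|H]]; exists k; [exists (/4)|exists (3/4)]; split; auto. Qed.

Lemma L2_to a p : L2 a p -> exists q1 q2 q3, Qp q1 q2 q3 /\ p = (a*q1, a*q2, a*q3).
Proof.
  intros [[i[j[k H]]]|[[i[j[k H]]]|[u1[u2[u3[i[j[k[eps[He[Hp H]]]]]]]]]]].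
  - exists (IZR i), (IZR j), (IZR k); split; [left; repeat split; eexists; reflexivity| exact H].
  - exists (IZR i + /2), (IZR j + /2), (IZR k + /2); split;
      [right; left; repeat split; eexists; reflexivity| exact H].
  - exists u1, u2, u3; split; [|exact H].
    assert (FI : isF (IZR k + eps)) by (destruct He; subst; exists k; [left|right]; reflexivity).
    assert (II : isI (IZR i)) by (eexists; reflexivity).
    assert (HH : isH (IZR j + /2)) by (eexists; reflexivity).
    unfold is_perm3 in Hp; unfold Qp, Pat.
    destruct Hp as [[?[??]]|[[?[??]]|[[?[??]]|[[?[??]]|[[?[??]]|[?[??]]]]]]]; subst; tauto.
Qed.

Lemma L2_of a q1 q2 q3 : Qp q1 q2 q3 -> L2 a (a*q1, a*q2, a*q3).
Proof.
  unfold Qp, Pat; intros HQ.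
  destruct HQ as [[c1[c2 c3]]|[[c1[c2 c3]]|[[c1[c2 c3]]|[[c1[c2 c3]]|[[c1[c2 c3]]|[[c1[c2 c3]]|[[c1[c2 c3]]|[c1[c2 c3]]]]]]]]];
  repeat match goal with
  | H : isI _ |- _ => destruct H as [? H]
  | H : isH _ |- _ => destruct H as [? H]
  | H : isF _ |- _ => apply Fe in H; destruct H as [? [? [? H]]]
  end; subst.
  - left; eexists; eexists; eexists; reflexivity.
  - right; left; eexists; eexists; eexists; reflexivity.
  - right; right; do 7 eexists; split; [eassumption|split; [|reflexivity]]; unfold is_perm3; intuition auto.
  - right; right; do 7 eexists; split; [eassumption|split; [|reflexivity]]; unfold is_perm3; intuition auto.
  - right; right; do 7 eexists; split; [eassumption|split; [|reflexivity]]; unfold is_perm3; intuition auto.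
  - right; right; do 7 eexists; split; [eassumption|split; [|reflexivity]]; unfold is_perm3; intuition auto.
  - right; right; do 7 eexists; split; [eassumption|split; [|reflexivity]]; unfold is_perm3; intuition auto.
  - right; right; do 7 eexists; split; [eassumption|split; [|reflexivity]]; unfold is_perm3; intuition auto.
Qed.

Lemma trip_eq (x1 x2 x3 y1 y2 y3 : R) : x1 = y1 -> x2 = y2 -> x3 = y3 -> (x1, x2, x3) = (y1, y2, y3).
Proof. intros; subst; reflexivity. Qed.

Lemma sqd_ge0 y1 y2 y3 q1 q2 q3 : 0 <= sqd y1 y2 y3 q1 q2 q3.
Proof. unfold sqd; pose proof (pow2_ge_0 (y1-q1)); pose proof (pow2_ge_0 (y2-q2));
  pose proof (pow2_ge_0 (y3-q3)); lra. Qed.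

Lemma dist_sc a x1 x2 x3 q1 q2 q3 : 0 < a ->
  dist3 (x1, x2, x3) (a*q1, a*q2, a*q3) = sqrt (a^2 * sqd (x1/a) (x2/a) (x3/a) q1 q2 q3).
Proof. intros ha; unfold dist3, sqd; f_equal; field; lra. Qed.

Lemma r_eq a : 0 < a -> 5 * sqrt 3 / 24 * a = sqrt (a^2 * rho).
Proof.
  intros ha. pose proof (sqrt_pos 3) as H0. pose proof (sqrt_sqrt 3 ltac:(lra)) as H3.
  replace (a^2 * rho) with ((5 * sqrt 3 / 24 * a)^2).
  - rewrite sqrt_pow2; [reflexivity|]. apply Rmult_le_pos; [|lra].
    apply Rmult_le_pos; [|lra]. apply Rmult_le_pos; lra.
  - unfold rho. replace ((5 * sqrt 3 / 24 * a)^2) with (25 * (sqrt 3 * sqrt 3) / 576 * a^2) by field.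
    rewrite H3; field.
Qed.

Lemma sqrt_mono a s t : 0 < a -> 0 <= s -> 0 <= t ->
  (sqrt (a^2 * s) <= sqrt (a^2 * t) <-> s <= t).
Proof.
  intros ha hs ht. assert (ha2 : 0 < a^2) by (apply pow_lt; lra). split; intros H.
  - apply sqrt_le_0 in H; [|nra|nra]. apply Rmult_le_reg_l with (a^2); auto.
  - apply sqrt_le_1_alt; apply Rmult_le_compat_l; lra.
Qed.

Lemma xsc a x1 x2 x3 : 0 < a -> (x1, x2, x3) = (a*(x1/a), a*(x2/a), a*(x3/a)).
Proof. intros ha; apply trip_eq; field; lra. Qed.

Lemma Lu_Lambda a x1 x2 x3 : 0 < a -> Lu (x1/a) (x2/a) (x3/a) -> Lambda a (x1, x2, x3).
Proof.
  intros ha [p1 [p2 [p3 [s1 [s2 [s3 [Hc [S1 [S2 [S3 [E1 [E2 E3]]]]]]]]]]]].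
  exists (a*p1), (a*p2), (a*p3), s1, s2, s3.
  split; [| repeat split; auto].
  - destruct Hc as [[[i Hi][[j Hj][k Hk]]]|[[i Hi][[j Hj][k Hk]]]]; subst;
      [left|right]; exists i, j, k; reflexivity.
  - unfold mkpt. apply trip_eq.
    + transitivity (a * (x1/a)); [field; lra| rewrite E1; field; lra].
    + transitivity (a * (x2/a)); [field; lra| rewrite E2; field; lra].
    + transitivity (a * (x3/a)); [field; lra| rewrite E3; field; lra].
Qed.

Lemma Lambda_Lu a x1 x2 x3 : 0 < a -> Lambda a (x1, x2, x3) -> Lu (x1/a) (x2/a) (x3/a).
Proof.
  intros ha [p1 [p2 [p3 [s1 [s2 [s3 [Hc [S1 [S2 [S3 Hx]]]]]]]]]].
  unfold mkpt in Hx; injection Hx as E1 E2 E3.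
  destruct Hc as [[i[j[k H]]]|[i[j[k H]]]]; unfold mkpt in H; injection H as F1 F2 F3; subst.
  - exists (IZR i), (IZR j), (IZR k), s1, s2, s3; repeat split; auto.
    + left; repeat split; eexists; reflexivity.
    + field; lra. + field; lra. + field; lra.
  - exists (IZR i + /2), (IZR j + /2), (IZR k + /2), s1, s2, s3; repeat split; auto.
    + right; repeat split; eexists; reflexivity.
    + field; lra. + field; lra. + field; lra.
Qed.

Lemma lower_of_min a x1 x2 x3 d : 0 < a -> is_min_dist a (x1, x2, x3) d ->
  forall q1 q2 q3, Qp q1 q2 q3 -> d <= sqrt (a^2 * sqd (x1/a) (x2/a) (x3/a) q1 q2 q3).
Proof.
  intros ha [_ H] q1 q2 q3 HQ. rewrite <- dist_sc by auto. apply H, L2_of; auto.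
Qed.

Lemma Lambda_min a x1 x2 x3 : 0 < a -> Lambda a (x1, x2, x3) ->
  is_min_dist a (x1, x2, x3) (5 * sqrt 3 / 24 * a).
Proof.
  intros ha HL. apply Lambda_Lu in HL; auto.
  destruct (Good_all (x1/a) (x2/a) (x3/a)) as [[q1 [q2 [q3 [HQ Hd]]]] _].
  pose proof (T3 _ _ _ _ _ _ HL HQ).
  rewrite r_eq by auto. split.
  - exists (a*q1, a*q2, a*q3); split; [apply L2_of; auto|].
    rewrite dist_sc by auto. f_equal. f_equal. lra.
  - intros p Hp. destruct (L2_to a p Hp) as [r1 [r2 [r3 [HQr ->]]]].
    rewrite dist_sc by auto. apply sqrt_mono; auto; [unfold rho; lra|apply sqd_ge0|].
    apply T3; auto.
Qed.

Lemma min_Lambda a x1 x2 x3 : 0 < a -> is_min_dist a (x1, x2, x3) (5 * sqrt 3 / 24 * a) ->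
  Lambda a (x1, x2, x3).
Proof.
  intros ha H. apply Lu_Lambda; auto.
  destruct (Good_all (x1/a) (x2/a) (x3/a)) as [_ HE]. apply HE.
  intros q1 q2 q3 HQ. pose proof (lower_of_min _ _ _ _ _ ha H _ _ _ HQ) as L.
  rewrite r_eq in L by auto. apply sqrt_mono in L; auto; [unfold rho; lra|apply sqd_ge0].
Qed.

Lemma min_exists a x1 x2 x3 : 0 < a -> exists d, is_min_dist a (x1, x2, x3) d.
Proof.
  intros ha. destruct (MinQ (x1/a) (x2/a) (x3/a)) as [q1 [q2 [q3 [HQ Hm]]]].
  exists (sqrt (a^2 * sqd (x1/a) (x2/a) (x3/a) q1 q2 q3)). split.
  - exists (a*q1, a*q2, a*q3); split; [apply L2_of; auto| apply dist_sc; auto].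
  - intros p Hp. destruct (L2_to a p Hp) as [r1 [r2 [r3 [HQr ->]]]].
    rewrite dist_sc by auto. apply sqrt_mono; auto using sqd_ge0.
Qed.

Lemma min_le a x1 x2 x3 d : 0 < a -> is_min_dist a (x1, x2, x3) d -> d <= 5 * sqrt 3 / 24 * a.
Proof.
  intros ha H. destruct (Good_all (x1/a) (x2/a) (x3/a)) as [[q1 [q2 [q3 [HQ Hd]]]] _].
  pose proof (lower_of_min _ _ _ _ _ ha H _ _ _ HQ) as L.
  rewrite r_eq by auto. eapply Rle_trans; [exact L|]. apply sqrt_mono; auto using sqd_ge0.
  unfold rho; lra.
Qed.

Lemma ex_fwd a q1 q2 q3 : 0 < a -> Qp q1 q2 q3 ->
  sqd (5/24) (5/24) (5/24) q1 q2 q3 = rho ->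
  L2 a (a*q1, a*q2, a*q3) /\
  dist3 (mkpt (5 * a / 24) (5 * a / 24) (5 * a / 24)) (a*q1, a*q2, a*q3) = 5 * sqrt 3 / 24 * a.
Proof.
  intros ha HQ Hs; split; [apply L2_of; auto|].
  unfold mkpt; rewrite dist_sc, r_eq by auto. f_equal. f_equal.
  rewrite <- Hs; unfold sqd; f_equal; [f_equal|]; f_equal; f_equal; field; lra.
Qed.

Theorem mainTheorem5 (a : R) (ha : 0 < a) :
  (forall x : pt, exists d, is_min_dist a x d) /\
  is_lub (fun d => exists x : pt, is_min_dist a x d) (5 * sqrt 3 / 24 * a) /\
  (forall x : pt, is_min_dist a x (5 * sqrt 3 / 24 * a) <-> Lambda a x) /\
  (forall p : pt,
     L2 a p /\ dist3 (mkpt (5 * a / 24) (5 * a / 24) (5 * a / 24)) p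
               = 5 * sqrt 3 / 24 * a
     <->
     p = mkpt 0 0 0 \/
     p = mkpt 0 (a / 4) (a / 2) \/
     p = mkpt 0 (a / 2) (a / 4) \/
     p = mkpt (a / 4) (a / 2) 0 \/
     p = mkpt (a / 2) (a / 4) 0 \/
     p = mkpt (a / 4) 0 (a / 2) \/
     p = mkpt (a / 2) 0 (a / 4)).
Proof.
  split; [|split; [|split]].
  - intros [[x1 x2] x3]; apply min_exists; auto.
  - split.
    + intros d [[[x1 x2] x3] H]. eapply min_le; eauto.
    + intros b Hb. apply Hb. exists (mkpt (5 * a / 24) (5 * a / 24) (5 * a / 24)).
      apply Lambda_min; auto. exists 0, 0, 0, 1, 1, 1.
      split; [left; exists 0%Z, 0%Z, 0%Z; unfold mkpt; apply trip_eq; simpl; ring|].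
      repeat split; try (left; reflexivity). unfold mkpt; apply trip_eq; ring.
  - intros [[x1 x2] x3]; split; [apply min_Lambda; auto| apply Lambda_min; auto].
  - intros p; split.
    + intros [Hp Hd]. destruct (L2_to a p Hp) as [q1 [q2 [q3 [HQ ->]]]].
      unfold mkpt in Hd; rewrite dist_sc, r_eq in Hd by auto.
      apply sqrt_inj in Hd; [| pose proof (sqd_ge0 (5 * a / 24 / a) (5 * a / 24 / a) (5 * a / 24 / a) q1 q2 q3); nra | unfold rho; nra].
      assert (Hs : sqd (5/24) (5/24) (5/24) q1 q2 q3 = rho).
      { replace (5 * a / 24 / a) with (5/24) in Hd by (field; lra).
        apply Rmult_eq_reg_l with (a^2); [exact Hd| nra]. }
      destruct (ex_cls _ _ _ HQ Hs) as [[?[??]]|[[?[??]]|[[?[??]]|[[?[??]]|[[?[??]]|[[?[??]]|[?[??]]]]]]]];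
        subst; unfold mkpt;
        [left|right;left|do 2 right;left|do 3 right;left|do 4 right;left|do 5 right;left|do 6 right];
        apply trip_eq; lra.
    + assert (QI : isI 0) by apply isI0. assert (QH : isH (/2)) by apply isHh.
      assert (QF : isF (/4)) by apply isFq.
      intros [H|[H|[H|[H|[H|[H|H]]]]]]; subst p.
      * replace (mkpt 0 0 0) with (a*0, a*0, a*0) by (unfold mkpt; apply trip_eq; ring).
        apply ex_fwd; auto; [left; repeat split; auto| unfold sqd, rho; field].
      * replace (mkpt 0 (a/4) (a/2)) with (a*0, a*/4, a*/2) by (unfold mkpt; apply trip_eq; field).
        apply ex_fwd; auto; [unfold Qp, Pat; tauto| unfold sqd, rho; field].
      * replace (mkpt 0 (a/2) (a/4)) with (a*0, a*/2, a*/4) by (unfold mkpt; apply trip_eq; field).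
        apply ex_fwd; auto; [unfold Qp, Pat; tauto| unfold sqd, rho; field].
      * replace (mkpt (a/4) (a/2) 0) with (a*/4, a*/2, a*0) by (unfold mkpt; apply trip_eq; field).
        apply ex_fwd; auto; [unfold Qp, Pat; tauto| unfold sqd, rho; field].
      * replace (mkpt (a/2) (a/4) 0) with (a*/2, a*/4, a*0) by (unfold mkpt; apply trip_eq; field).
        apply ex_fwd; auto; [unfold Qp, Pat; tauto| unfold sqd, rho; field].
      * replace (mkpt (a/4) 0 (a/2)) with (a*/4, a*0, a*/2) by (unfold mkpt; apply trip_eq; field).
        apply ex_fwd; auto; [unfold Qp, Pat; tauto| unfold sqd, rho; field].
      * replace (mkpt (a/2) 0 (a/4)) with (a*/2, a*0, a*/4) by (unfold mkpt; apply trip_eq; field).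
        apply ex_fwd; auto; [unfold Qp, Pat; tauto| unfold sqd, rho; field].
Qed.
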